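(* Let $L$ be a simplicial complex and $K\subseteq L$ a subcomplex such that the relative complex $(L,K)$ has dimension $d$, i.e. $d=\max\{\dim F: F\in L\setminus K\}$. Let $\kappa:V(K)\to\{0,1,\dots,m-1\}$ be a proper $m$-coloring of $K$ (it need not be proper on edges of $L\setminus K$). Then there is a complex $L'$, obtained from $L$ by a finite sequence of stellar subdivisions, such that (1) $K$ is a subcomplex of $L'$ (no face of $K$ is subdivided), and (2) $\kappa$ extends to a proper coloring $\kappa':V(L')\to\{0,1,\dots,\max\{m-1,d\}\}$ such that every vertex of $L'$ not in $K$ receives a color in $\{0,1,\dots,d\}$.
   Context: All simplicial complexes are finite abstract simplicial complexes. For a finite set $F$, $\overline{F}$ denotes the simplex of all subsets of $F$ and $\partial\overline{F}$ the complex of proper subsets; $*$ denotes join; $\mathrm{lk}_\Delta(F)=\{G\in\Delta: F\cap G=\emptyset, F\cup G\in\Delta\}$. The stellar subdivision of $\Delta$ at a nonempty face $F$ is $\mathrm{sd}_F(\Delta)=\{G\in\Delta: F\not\subseteq G\}\cup(\overline{\{a\}}*\partial\overline{F}*\mathrm{lk}_\Delta(F))$, where $a$ is a new vertex. A proper $m$-coloring of a complex is a map from its vertex set to $\{0,\dots,m-1\}$ giving distinct colors to the endpoints of every edge. *)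

(* Defs.v *)
From mathcomp Require Import all_boot.
Set Implicit Arguments. Unset Strict Implicit. Unset Printing Implicit Defensive.

(* A face (finite set of vertices) is represented canonically by the
   strictly increasing list of its vertices. *)
Definition is_face (F : seq nat) : bool := sorted ltn F.

Definition fsub (G F : seq nat) : bool := all (fun x => x \in F) G.

(* A (finite abstract) simplicial complex: a finite list of faces,
   closed under taking subsets (membership in the list is what matters). *)
Definition is_complex (D : seq (seq nat)) : Prop :=
  (forall F, F \in D -> is_face F) /\
  (forall F G, F \in D -> is_face G -> fsub G F -> G \in D).

Definition vert (D : seq (seq nat)) (v : nat) : Prop := exists2 F, F \in D & v \in F.

Definition link (D : seq (seq nat)) (F G : seq nat) : Prop :=
  G \in D /\ (forall x, x \in F -> x \notin G) /\
  exists2 U, U \in D & U =i F ++ G.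

(* D' is the stellar subdivision sd_F(D) of D at the nonempty face F,
   with new vertex a:
   sd_F(D) = {G in D : F not subset of G} cup ({a} * boundary(F) * lk_D(F)). *)
Definition stellar (D : seq (seq nat)) (F : seq nat) (a : nat) (D' : seq (seq nat)) : Prop :=
  F \in D /\ F != [::] /\ ~ vert D a /\
  (forall G, G \in D' -> is_face G) /\
  (forall G, is_face G ->
     (G \in D' <->
        ((G \in D /\ ~~ fsub F G) \/
         (exists P H, fsub P F /\ ~~ fsub F P /\ link D F H /\
                      G =i a :: P ++ H)))).

Inductive stellar_seq : seq (seq nat) -> seq (seq nat) -> Prop :=
  | ss_refl D : stellar_seq D D
  | ss_step D F a D' D'' : stellar D F a D' -> stellar_seq D' D'' -> stellar_seq D D''.

Definition proper_coloring (D : seq (seq nat)) (c : nat -> nat) (m : nat) : Prop :=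
  (forall v, vert D v -> c v < m) /\
  (forall x y, [:: x; y] \in D -> c x != c y).

(* the relative complex (L, K) has dimension d:
   d = max { dim F : F in L \ K }, where dim F = |F| - 1 *)
Definition rel_dim (L K : seq (seq nat)) (d : nat) : Prop :=
  (exists2 F, F \in L & (F \notin K) && (size F == d.+1)) /\
  (forall F, F \in L -> F \notin K -> size F <= d.+1).

(* Main.v *)
Require Import Defs.
From mathcomp Require Import all_boot.
Set Implicit Arguments. Unset Strict Implicit. Unset Printing Implicit Defensive.
Implicit Types (D K L : seq (seq nat)) (F G H P U : seq nat) (a p q v w x y : nat).

Definition canon (s : seq nat) := sort leq (undup s).

Lemma face_uniq F : is_face F -> uniq F.
Proof. exact: (sorted_uniq ltn_trans ltnn). Qed.

Lemma canon_face s : is_face (canon s).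
Proof.
by rewrite /is_face ltn_sorted_uniq_leq sort_uniq undup_uniq sort_sorted //; exact: leq_total.
Qed.

Lemma mem_canon s : canon s =i s.
Proof. by move=> x; rewrite /canon mem_sort mem_undup. Qed.

Lemma face_eq F G : is_face F -> is_face G -> F =i G -> F = G.
Proof. exact: (irr_sorted_eq ltn_trans ltnn). Qed.

Lemma fsubP G F : reflect {subset G <= F} (fsub G F).
Proof. exact: allP. Qed.

Lemma cx_sub D F G : is_complex D -> F \in D -> {subset G <= F} -> canon G \in D.
Proof.
move=> [_ cl] FD sGF; apply: (cl F) => //; first exact: canon_face.
by apply/fsubP=> x; rewrite mem_canon => /sGF.
Qed.

Lemma cx_face D F : is_complex D -> F \in D -> is_face F.
Proof. by case=> h _ /h. Qed.

Lemma cx_sub_face D F G : is_complex D -> F \in D -> is_face G -> {subset G <= F} -> G \in D.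
Proof. by move=> [_ cl] FD fG sGF; apply: (cl F) => //; apply/fsubP. Qed.

Lemma canon_id F : is_face F -> canon F = F.
Proof. by move=> fF; apply: face_eq => //; [exact: canon_face| exact: mem_canon]. Qed.

Lemma vertP D v : reflect (vert D v) (v \in flatten D).
Proof. exact: flattenP. Qed.

Definition adjb (D : seq (seq nat)) x y :=
  (x != y) && has (fun F => (x \in F) && (y \in F)) D.

Lemma adjP D x y : reflect (x != y /\ exists2 F, F \in D & (x \in F) && (y \in F)) (adjb D x y).
Proof.
apply: (iffP andP) => [[-> /hasP [F FD h]]|[-> [F FD h]]]; split => //.
  by exists F.
by apply/hasP; exists F.
Qed.

Lemma adjbC D x y : adjb D x y = adjb D y x.
Proof.
rewrite /adjb eq_sym; congr (_ && _); apply: eq_has => F; exact: andbC.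
Qed.

Lemma adj_vert D x y : adjb D x y -> vert D x /\ vert D y.
Proof. by move=> /adjP [_ [F FD /andP [h1 h2]]]; split; exists F. Qed.

Lemma edge_in D x y : is_complex D -> adjb D x y -> x < y -> [:: x; y] \in D.
Proof.
move=> cD /adjP [_ [F FD /andP [xF yF]]] xy.
apply: (cx_sub_face cD FD); first by rewrite /is_face /= xy.
by move=> z; rewrite !inE => /orP [] /eqP ->.
Qed.

Lemma edge_adj D x y : is_complex D -> [:: x; y] \in D -> adjb D x y.
Proof.
move=> cD eD; have := cx_face cD eD; rewrite /is_face /= andbT => xy.
apply/adjP; split; first by rewrite neq_ltn xy.
by exists [:: x; y]; rewrite // !inE !eqxx ?orbT.
Qed.

Definition fresh (D : seq (seq nat)) := (foldr maxn 0 (flatten D)).+1.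

Lemma fresh_gt D v : v \in flatten D -> v < fresh D.
Proof.
rewrite /fresh ltnS; elim: (flatten D) => //= x s IH.
rewrite inE => /orP [/eqP ->|/IH h]; first exact: leq_maxl.
exact: leq_trans h (leq_maxr _ _).
Qed.

Lemma fresh_nvert D : ~ vert D (fresh D).
Proof. by move/vertP/fresh_gt; rewrite ltnn. Qed.

Definition lkb (D : seq (seq nat)) (F H : seq nat) :=
  all (fun x => x \notin H) F &&
  has (fun U => fsub U (F ++ H) && fsub (F ++ H) U) D.

Lemma lkbP D F H : reflect (link D F H) ((H \in D) && lkb D F H).
Proof.
apply: (iffP idP).
  move=> /andP [HD]; rewrite /lkb => /andP [/allP dj /hasP [U UD /andP [/fsubP s1 /fsubP s2]]].
  split=> //; split; first by move=> x /dj.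
  exists U => // x; apply/idP/idP; [exact: s1 | exact: s2].
move=> [HD [dj [U UD eU]]]; rewrite HD /= /lkb; apply/andP; split.
  by apply/allP => x /dj.
apply/hasP; exists U => //; apply/andP; split; apply/fsubP => x; by rewrite eU.
Qed.

Definition sdE (D : seq (seq nat)) p q a :=
  [seq G <- D | ~~ fsub [:: p; q] G] ++
  [seq canon (a :: P ++ H) | P <- [:: [::]; [:: p]; [:: q]], H <- [seq H <- D | lkb D [:: p; q] H]].

Lemma sdE_stellar D p q a :
  is_complex D -> p < q -> [:: p; q] \in D -> ~ vert D a ->
  stellar D [:: p; q] a (sdE D p q a).
Proof.
move=> cD pq eD na; split=> //; split=> //; split=> //; split.
  move=> G; rewrite mem_cat => /orP [|].
    by rewrite mem_filter => /andP [_ /(cx_face cD)].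
  by move=> /allpairsP [[P H] [_ _ ->]]; exact: canon_face.
move=> G fG; split.
  rewrite mem_cat => /orP [|].
    by rewrite mem_filter => /andP [h1 h2]; left.
  move=> /allpairsP [[P H] /= [PP]]; rewrite mem_filter => /andP [lH HD] ->.
  right; exists P, H; split; last split; last split.
  - by apply/fsubP => x; move: PP; rewrite !inE => /orP [/eqP ->|/orP [] /eqP ->];
       rewrite ?inE // => /eqP ->; rewrite eqxx ?orbT.
  - move: PP; rewrite !inE => /orP [/eqP ->|/orP [] /eqP ->];
      by rewrite /fsub /= ?inE ?eqxx ?(gtn_eqF pq) ?(ltn_eqF pq) ?andbF.
  - by apply/lkbP; rewrite HD.
  - exact: mem_canon.
move=> [[GD nF]|[P [H [sP [nP [lH eG]]]]]].
  by rewrite mem_cat mem_filter nF GD.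
have pqF : forall x, x \in [:: p; q] -> x \notin H by case: lH => _ [dj _].
set P0 := if p \in P then [:: p] else if q \in P then [:: q] else [::].
have eP : P0 =i P.
  move: sP nP => /fsubP sP; rewrite /fsub /= andbT => nP x.
  rewrite /P0; case: ifP => pP.
    have qP : q \notin P by apply: contra nP => ->; rewrite andbT.
    rewrite inE; apply/eqP/idP => [->//|xP].
    by move: (sP _ xP); rewrite !inE => /orP [/eqP//|/eqP e]; rewrite -e xP in qP.
  case: ifP => qP.
    rewrite inE; apply/eqP/idP => [->//|xP].
    by move: (sP _ xP); rewrite !inE => /orP [/eqP e|/eqP //]; rewrite -e xP in pP.
  rewrite in_nil; apply/esym/negbTE; apply/negP => xP.
  by move: (sP _ xP); rewrite !inE => /orP [] /eqP e; [rewrite -e xP in pP|rewrite -e xP in qP].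
have -> : G = canon (a :: P0 ++ H).
  apply: face_eq => //; first exact: canon_face.
  by move=> x; rewrite mem_canon eG !inE !mem_cat eP.
rewrite mem_cat; apply/orP; right.
apply: (allpairs_f (fun P H => canon (a :: P ++ H))).
  by rewrite /P0; case: ifP => _; [|case: ifP => _]; rewrite !inE ?eqxx ?orbT.
by move/lkbP: lH => /andP [HD lH]; rewrite mem_filter lH HD.
Qed.

Section St.
Variables (D D' : seq (seq nat)) (F : seq nat) (a : nat).
Hypothesis cD : is_complex D.
Hypothesis st : stellar D F a D'.

Lemma st_faces G : G \in D' -> is_face G.
Proof. by case: st => _ [_ [_ [h _]]]; apply: h. Qed.

Lemma st_iff G : is_face G -> (G \in D' <->
        ((G \in D /\ ~~ fsub F G) \/
         (exists P H, fsub P F /\ ~~ fsub F P /\ link D F H /\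
                      G =i a :: P ++ H))).
Proof. by case: st => _ [_ [_ [_ h]]]; apply: h. Qed.

Lemma st_FD : F \in D. Proof. by case: st. Qed.
Lemma st_F0 : F != [::]. Proof. by case: st => _ []. Qed.
Lemma st_na : ~ vert D a. Proof. by case: st => _ [_ []]. Qed.

Lemma st_old G : G \in D' -> a \notin G -> G \in D /\ ~~ fsub F G.
Proof.
move=> GD aG; have fG := st_faces GD.
case: ((st_iff fG).1 GD) => // [[P [H [_ [_ [_ e]]]]]].
by move: aG; rewrite e inE eqxx.
Qed.

Lemma st_new G : G \in D' -> a \in G ->
  exists P H U, [/\ {subset P <= F}, ~~ fsub F P, H \in D &
     (forall x, x \in F -> x \notin H)] /\ [/\ U \in D, U =i F ++ H & G =i a :: P ++ H].
Proof.
move=> GD aG; have fG := st_faces GD.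
case: ((st_iff fG).1 GD) => [[GD0 _]|[P [H [sP [nP [[HD [dj [U UD eU]]] e]]]]]].
  by case: st_na; exists G.
exists P, H, U; split; split=> //; exact/fsubP.
Qed.

Lemma st_keep G : G \in D -> ~~ fsub F G -> G \in D'.
Proof.
move=> GD nF; apply/(st_iff (cx_face cD GD)); by left.
Qed.

Lemma st_complex : is_complex D'.
Proof.
split; first exact: st_faces.
move=> G G' GD fG' /fsubP sub.
apply/(st_iff fG').
case aG: (a \in G); last first.
  have [GD0 nF] := st_old GD (negbT aG).
  left; split; first exact: (cx_sub_face cD GD0).
  by apply: contra nF => /fsubP h; apply/fsubP => x /h /sub.
have [P [H [U [[sP nP HD dj] [UD eU eG]]]]] := st_new GD aG.
case aG': (a \in G'); last first.
  left; split.
    apply: (cx_sub_face cD UD fG') => x xG'; rewrite eU mem_cat.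
    move: (sub _ xG'); rewrite eG inE mem_cat => /orP [/eqP xa|/orP [/sP ->//|->]];
      last by rewrite orbT.
    by rewrite xa aG' in xG'.
  apply: contra nP => /fsubP h; apply/fsubP => x xF.
  move: (sub _ (h _ xF)); rewrite eG inE mem_cat => /orP [/eqP xa|/orP [//|xH]].
    by case: st_na; exists F; [exact: st_FD| rewrite -xa].
  by rewrite (negbTE (dj _ xF)) in xH.
right; exists [seq x <- P | x \in G'], [seq x <- H | x \in G']; split; last split; last split.
- by apply/fsubP => x; rewrite mem_filter => /andP [_ /sP].
- apply: contra nP => /fsubP h; apply/fsubP => x /h; by rewrite mem_filter => /andP [].
- have fH := cx_face cD HD.
  have fH' : is_face [seq x <- H | x \in G'] by apply: sorted_filter => //; exact: ltn_trans.
  split; first by apply: (cx_sub_face cD HD fH') => x; rewrite mem_filter => /andP [].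
  split; first by move=> x /dj; apply: contra; rewrite mem_filter => /andP [].
  exists (canon (F ++ [seq x <- H | x \in G'])).
    apply: (cx_sub cD UD) => x; rewrite eU !mem_cat mem_filter => /orP [->//|/andP [_ ->]].
    by rewrite orbT.
  exact: mem_canon.
- move=> x; rewrite inE !mem_cat !mem_filter.
  apply/idP/idP.
    move=> xG'; move: (sub _ xG'); rewrite eG inE mem_cat xG' /=.
    by move=> /orP [->|/orP [->|->]]; rewrite ?orbT.
  by move=> /orP [/eqP ->//|/orP [] /andP [->]].
Qed.

Lemma st_a : [:: a] \in D'.
Proof.
apply/(st_iff _); first by [].
right; exists [::], [::]; split; first by [].
split.
  by move: st_F0; case: F.
split; last by [].
split; first by apply: (cx_sub_face cD st_FD).
split=> //; exists F; first exact: st_FD.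
by move=> x; rewrite cats0.
Qed.

Lemma st_vert' v : vert D' v -> vert D v \/ v = a.
Proof.
move=> [G GD vG]; case aG: (a \in G).
  have [P [H [U [[sP nP HD dj] [UD eU eG]]]]] := st_new GD aG.
  move: vG; rewrite eG inE mem_cat => /orP [/eqP->|/orP [/sP vF|vH]]; [by right| |].
    by left; exists F; [exact: st_FD|].
  by left; exists H.
by left; exists G => //; case: (st_old GD (negbT aG)).
Qed.

Lemma st_adj x y : adjb D' x y -> x != a -> y != a -> adjb D x y.
Proof.
move=> /adjP [xy [G GD /andP [xG yG]]] xa ya; apply/adjP; split=> //.
case aG: (a \in G); last first.
  by exists G; [case: (st_old GD (negbT aG))|rewrite xG].
have [P [H [U [[sP nP HD dj] [UD eU eG]]]]] := st_new GD aG.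
exists U => //; rewrite !eU !mem_cat.
move: xG yG; rewrite !eG !inE !mem_cat (negbTE xa) (negbTE ya) /=.
by move=> /orP [/sP->|->] /orP [/sP->|->]; rewrite ?orbT.
Qed.

Lemma st_notin_old G : G \in D -> a \notin G.
Proof. by move=> GD; apply/negP => aG; case: st_na; exists G. Qed.

End St.

Section StE.
Variables (D D' : seq (seq nat)) (p q a : nat).
Hypothesis cD : is_complex D.
Hypothesis st : stellar D [:: p; q] a D'.
Hypothesis pq : p < q.

Lemma ste_vert v : vert D v -> vert D' v.
Proof.
move=> [G GD vG]; exists [:: v]; last by rewrite inE.
apply: (st_keep cD st); first by apply: (cx_sub_face cD GD) => // x; rewrite inE => /eqP ->.
rewrite /fsub /= !inE andbT; apply/negP => /andP [/eqP e1 /eqP e2].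
by move: pq; rewrite e1 e2 ltnn.
Qed.

Lemma ste_noedge : ~~ adjb D' p q.
Proof.
apply/negP => /adjP [_ [G GD /andP [pG qG]]].
case aG: (a \in G); last first.
  have [_ nF] := st_old st GD (negbT aG).
  by move: nF; rewrite /fsub /= pG qG.
have [P [H [U [[sP nP HD dj] [UD eU eG]]]]] := st_new st GD aG.
have na := st_na st.
have pa : p != a by apply/eqP => e; case: na; exists [:: p; q]; [exact: st_FD st|rewrite e inE eqxx].
have qa : q != a by apply/eqP => e; case: na; exists [:: p; q]; [exact: st_FD st|rewrite e !inE eqxx orbT].
have pH : p \notin H by apply: dj; rewrite inE eqxx.
have qH : q \notin H by apply: dj; rewrite !inE eqxx orbT.
move: pG qG; rewrite !eG !inE !mem_cat (negbTE pa) (negbTE qa) (negbTE pH) (negbTE qH) !orbF /=.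
by move=> pP qP; move: nP; rewrite /fsub /= pP qP.
Qed.

Lemma ste_K K : is_complex K -> {subset K <= D} -> [:: p; q] \notin K -> {subset K <= D'}.
Proof.
move=> cK sKD nK G GK; apply: (st_keep cD st (sKD _ GK)).
apply: contra nK => /fsubP h; apply: (cx_sub_face cK GK) => //.
by rewrite /is_face /= pq.
Qed.

End StE.

Lemma other_pt p q P : p < q -> {subset P <= [:: p; q]} -> ~~ fsub [:: p; q] P ->
  let f := if p \in P then q else p in
  [/\ f \in [:: p; q], f \notin P & forall x, x \in P -> x != f].
Proof.
move=> pq sP nP f; have fP : f \notin P.
  rewrite /f; case pP: (p \in P); last by rewrite pP.
  by apply: contra nP => qP; rewrite /fsub /= pP qP.
split=> //; first by rewrite /f; case: ifP; rewrite !inE eqxx ?orbT.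
by move=> x xP; apply: contraNneq fP => <-.
Qed.

Lemma size_le_cons (G S : seq nat) a : uniq G -> {subset G <= a :: S} -> size G <= (size S).+1.
Proof. by move=> uG sG; exact: (uniq_leq_size uG sG). Qed.

Lemma count_le_rem (G S : seq nat) (pr : pred nat) a f :
  uniq G -> f \in S -> {subset [seq x <- G | pr x] <= a :: rem f S} -> count pr G <= size S.
Proof.
move=> uG fS sub; rewrite -size_filter.
have := uniq_leq_size (filter_uniq pr uG) sub.
rewrite /= size_rem // prednK //; move: fS; clear; by case: S.
Qed.

Section Main.
Variables (K : seq (seq nat)) (d m : nat) (kappa : nat -> nat).
Hypothesis cK : is_complex K.
Hypothesis pK : proper_coloring K kappa m.

Definition GI D (col : nat -> bool) (c : nat -> nat) :=
 [/\ is_complex D, {subset K <= D},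
     (forall F, F \in D -> F \notin K -> size F <= d.+1),
     (forall v, vert K v -> col v /\ c v = kappa v) &
     (forall v, vert D v -> col v -> ~ vert K v -> c v <= d)].

Definition bad D (col : nat -> bool) (c : nat -> nat) x y :=
  [&& adjb D x y, col x, col y & c x == c y].

Definition cnt (Ps : seq nat) (col : nat -> bool) (c : nat -> nat) G w :=
  count (fun x => [&& x != w, col x & c x \notin Ps]) G.

Lemma badC D col c x y : bad D col c x y = bad D col c y x.
Proof. by rewrite /bad adjbC eq_sym; case: (col x); case: (col y). Qed.

Section Step.
Variables (D : seq (seq nat)) (col : nat -> bool) (c : nat -> nat) (p q : nat).
Variables (col1 : nat -> bool) (c1 : nat -> nat).
Hypothesis gi : GI D col c.
Hypothesis pq : p < q.
Hypothesis eD : [:: p; q] \in D.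
Hypothesis eK : [:: p; q] \notin K.
Let a := fresh D.
Let D1 := sdE D p q a.
Hypothesis e1 : forall v, v != a -> col1 v = col v /\ c1 v = c v.
Hypothesis e1a : col1 a -> c1 a <= d.

Let cD : is_complex D. Proof. by case: gi. Qed.
Lemma step_st : stellar D [:: p; q] a D1.
Proof. by apply: sdE_stellar => //; exact: fresh_nvert. Qed.
Let st := step_st.

Lemma step_na v : vert D v -> v != a.
Proof. by move=> vD; apply/eqP => e; apply: (@fresh_nvert D); move: vD; rewrite e. Qed.

Lemma step_GI : GI D1 col1 c1.
Proof.
case: gi => _ sKD szD Kc Dc; split.
- exact: st_complex cD st.
- by move=> G GK; exact: (ste_K cD st pq cK sKD eK GK).
- move=> G GD1 GK; case aG: (a \in G); last first.
    by have [GD _] := st_old st GD1 (negbT aG); exact: szD.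
  have [P [H [U [[sP nP HD dj] [UD eU eG]]]]] := st_new st GD1 aG.
  have [fpq fP fne] := other_pt pq sP nP.
  set f := (if p \in P then q else p) in fpq fP fne.
  have UK : U \notin K.
    apply: contra eK => UK; apply: (cx_sub_face cK UK); first by rewrite /is_face /= pq.
    by move=> x xe; rewrite eU mem_cat xe.
  apply: leq_trans (szD _ UD UK).
  have fU : f \in U by rewrite eU mem_cat fpq.
  have uU := face_uniq (cx_face cD UD).
  rewrite -(prednK (_ : 0 < size U)); last by move: fU; clear; case: U.
  rewrite -(size_rem fU); apply: size_le_cons; first exact: face_uniq (st_faces st GD1).
  move=> x; rewrite eG inE mem_cat => /orP [/eqP->|xPH]; first exact: mem_head.
  rewrite in_cons; apply/orP; right.
  rewrite (mem_rem_uniq _ uU) inE; apply/andP; split.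
    move: xPH => /orP [/fne //|xH]; apply: contraNneq (dj _ fpq) => <-; exact: xH.
  by rewrite eU mem_cat; move: xPH => /orP [/sP ->|->]; rewrite ?orbT.
- move=> v vK; have va : v != a.
    by apply: step_na; case: vK => F FK vF; exists F => //; exact: sKD.
  by have [-> ->] := e1 va; exact: Kc.
- move=> v vD1; case: (eqVneq v a) => [->|va]; first by move=> /e1a.
  have [-> ->] := e1 va; apply: Dc.
  by case: (st_vert' st vD1) => // /eqP; rewrite (negbTE va).
Qed.

Lemma step_vert v : vert D v -> vert D1 v.
Proof. by move=> vD; exact: (ste_vert cD st pq vD). Qed.

Lemma step_avert : vert D1 a.
Proof. by exists [:: a]; [exact: st_a cD st| rewrite inE]. Qed.

Lemma step_vert' v : vert D1 v -> vert D v \/ v = a.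
Proof. by move=> vD; exact: (st_vert' st vD). Qed.

Lemma step_bad x y : bad D1 col1 c1 x y -> x != a -> y != a -> bad D col c x y.
Proof.
move=> /and4P [adj cx cy cxy] xa ya.
have [ex1 ex2] := e1 xa; have [ey1 ey2] := e1 ya.
rewrite /bad (st_adj st adj xa ya) -ex1 -ey1 cx cy -ex2 -ey2 cxy.
done.
Qed.

Lemma step_noedge : ~~ adjb D1 p q.
Proof. exact: ste_noedge st. Qed.

Hypothesis cpq : col p /\ col q /\ c p = c q.

Lemma step_mono (Ps : seq nat) v b : c p \notin Ps -> v != a ->
  (forall G, G \in D -> v \in G -> cnt Ps col c G v <= b) ->
  (forall G, G \in D1 -> v \in G -> cnt Ps col1 c1 G v <= b).
Proof.
move=> cPs va hb G GD1 vG; case aG: (a \in G); last first.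
  have [GD _] := st_old st GD1 (negbT aG).
  apply: leq_trans (hb _ GD vG); rewrite /cnt leq_eqVlt; apply/orP; left; apply/eqP.
  apply: eq_in_count => x xG; have xa : x != a.
    by apply: contraNneq (negbT aG) => <-.
  by have [-> ->] := e1 xa.
have [P [H [U [[sP nP HD dj] [UD eU eG]]]]] := st_new st GD1 aG.
have [fpq fP fne] := other_pt pq sP nP.
set f := (if p \in P then q else p) in fpq fP fne.
have vPH : (v \in P) || (v \in H) by move: vG; rewrite eG inE mem_cat (negbTE va).
have vU : v \in U by rewrite eU mem_cat; move: vPH => /orP [/sP->|->]; rewrite ?orbT.
apply: leq_trans (hb _ UD vU).
have uU := face_uniq (cx_face cD UD).
rewrite /cnt -[count _ U]size_filter; apply: (count_le_rem (a := a) (f := f)).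
- exact: face_uniq (st_faces st GD1).
- rewrite mem_filter eU mem_cat fpq andbT; apply/and3P; split.
  + apply: contraNneq (negbT (erefl false)) => fv; move: vPH; rewrite -fv.
    by rewrite (negbTE fP) /= (negbTE (dj _ fpq)).
  + by move: fpq; rewrite !inE => /orP [] /eqP ->; case: cpq => [? [? _]].
  + move: fpq; rewrite !inE => /orP [] /eqP ->; first exact: cPs.
    by case: cpq => [_ [_ <-]].
- move=> x; rewrite mem_filter => /andP [/and3P [xv cx cxP] xG].
  move: xG; rewrite eG inE mem_cat => /orP [/eqP->|xPH]; first exact: mem_head.
  rewrite in_cons; apply/orP; right.
  have xa : x != a.
    by apply: step_na; exists U => //; rewrite eU mem_cat; move: xPH => /orP [/sP->|->]; rewrite ?orbT.
  have [ex1 ex2] := e1 xa.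
  rewrite (mem_rem_uniq _ (filter_uniq _ uU)) inE mem_filter; apply/and3P; split.
  + move: xPH => /orP [/fne //|xH]; apply: contraNneq (dj _ fpq) => <-; exact: xH.
  + by rewrite xv -ex1 cx -ex2 cxP.
  + by rewrite eU mem_cat; move: xPH => /orP [/sP ->|->]; rewrite ?orbT.
Qed.

Lemma step_newcnt (Phi : seq nat) w u n : w \in [:: p; q] -> u \in [:: p; q] -> w != u ->
  c w \notin Phi ->
  (forall G, G \in D -> w \in G -> cnt Phi col c G w <= n) ->
  forall G, G \in D1 -> a \in G -> cnt (c w :: Phi) col1 c1 G a <= n.-1.
Proof.
move=> wpq upq wu cPhi hb G GD1 aG.
have cpq' : forall x, x \in [:: p; q] -> col x /\ c x = c w.
  move=> x; case: cpq => [cp [cq ce]].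
  by move: wpq; rewrite !inE => /orP [] /eqP -> /orP [] /eqP ->.
have [P [H [U [[sP nP HD dj] [UD eU eG]]]]] := st_new st GD1 aG.
have wU : w \in U by rewrite eU mem_cat wpq.
have uU := face_uniq (cx_face cD UD).
set pr0 := fun x => [&& x != w, col x & c x \notin Phi].
have uf : u \in [seq x <- U | pr0 x].
  rewrite mem_filter eU mem_cat upq andbT /pr0 eq_sym wu /=.
  by have [-> ->] := cpq' _ upq.
have := hb _ UD wU; rewrite /cnt -size_filter => hU.
have hU' : (size [seq x <- U | pr0 x]).-1 <= n.-1 by rewrite -!subn1 leq_sub2r.
apply: leq_trans hU'; rewrite /cnt -size_filter -(size_rem uf).
apply: uniq_leq_size; first exact: filter_uniq (face_uniq (st_faces st GD1)).
move=> x; rewrite mem_filter => /andP [/and3P [xa cx cxP] xG].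
have [ex1 ex2] := e1 xa.
have xPH : (x \in P) || (x \in H) by move: xG; rewrite eG inE mem_cat (negbTE xa).
have xH : x \in H.
  move: xPH => /orP [/sP xpq|//]; have [_ e] := cpq' _ xpq.
  by move: cxP; rewrite ex2 e inE eqxx.
have xpq : x \notin [:: p; q] by apply/negP => h; move: (dj _ h); rewrite xH.
rewrite (mem_rem_uniq _ (filter_uniq _ uU)) inE mem_filter; apply/and3P; split.
- by apply: contraNneq xpq => ->.
- rewrite /pr0; apply/and3P; split.
  + by apply: contraNneq xpq => ->.
  + by rewrite -ex1.
  + by move: cxP; rewrite ex2 inE negb_or => /andP [].
- by rewrite eU mem_cat xH orbT.
Qed.

End Step.
Lemma ss_trans D1 D2 D3 : stellar_seq D1 D2 -> stellar_seq D2 D3 -> stellar_seq D1 D3.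
Proof.
elim=> // D F a D' D'' st _ IH h; exact: ss_step st (IH h).
Qed.

Lemma pick_color (s : seq nat) : size s <= d -> exists2 z, z <= d & z \notin s.
Proof.
move=> hs; case: (boolP (has (fun z => z \notin s) (iota 0 d.+1))).
  by move=> /hasP [z]; rewrite mem_iota add0n ltnS => zd zs; exists z.
move=> /hasPn h; have sub : {subset iota 0 d.+1 <= s} by move=> z /h; rewrite negbK.
have := uniq_leq_size (iota_uniq 0 d.+1) sub; rewrite size_iota => h2.
by have := leq_trans h2 hs; rewrite ltnn.
Qed.

Definition Pre D col c w (Phi : seq nat) n :=
 [/\ GI D col c, vert D w, ~ vert K w, col w & c w <= d] /\
 [/\ c w \notin Phi, size Phi + n <= d &
     (forall G, G \in D -> w \in G -> cnt Phi col c G w <= n)].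

Definition Post D (col : nat -> bool) c D' col' c' w (Phi : seq nat) :=
 [/\ stellar_seq D D', GI D' col' c',
     (forall v, vert D v -> [/\ vert D' v, col' v = col v & c' v = c v]),
     (forall v, vert D' v -> ~ vert D v -> [/\ col' v, c' v <= d & c' v \notin c w :: Phi]) &
     ((forall x y, bad D' col' c' x y -> [&& bad D col c x y, x != w & y != w]) /\
      (forall (Ps : seq nat) v b, {subset Ps <= Phi} -> vert D v ->
         (forall G, G \in D -> v \in G -> cnt Ps col c G v <= b) ->
         (forall G, G \in D' -> v \in G -> cnt Ps col' c' G v <= b)))].

Lemma Post_refl D col c w Phi :
  GI D col c -> (forall y, ~~ bad D col c w y) -> Post D col c D col c w Phi.
Proof.
move=> gi nb; split.
- exact: ss_refl.
- exact: gi.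
- by [].
- by move=> v vD nvD; case: (nvD vD).
split=> // x y bxy; rewrite bxy /=.
apply/andP; split; apply/eqP => e.
  by move: (nb y); rewrite -e bxy.
by move: (nb x); rewrite badC -e bxy.
Qed.

Lemma Post_nobad D col c w Phi : GI D col c ->
  ~~ has (bad D col c w) (undup (flatten D)) -> exists D' col' c', Post D col c D' col' c' w Phi.
Proof.
move=> gi /hasPn h; exists D, col, c; apply: Post_refl => // y; apply/negP => b.
have [adj _ _ _] := and4P b; have [_ yD] := adj_vert adj.
by move: (h y); rewrite mem_undup b; move/vertP: yD => -> /(_ isT).
Qed.

Definition mu D col c w := count (bad D col c w) (undup (flatten D)).

Lemma loop n :
  (0 < n -> forall D col c w Phi, Pre D col c w Phi n.-1 ->
     exists D' col' c', Post D col c D' col' c' w Phi) ->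
  forall k D col c w Phi, Pre D col c w Phi n -> mu D col c w <= k ->
     exists D' col' c', Post D col c D' col' c' w Phi.
Proof.
move=> IH k; elim: k => [|k IHk] D col c w Phi pre hmu.
  apply: Post_nobad; first by case: pre => [[]].
  by rewrite has_count -leqNgt.
case: (boolP (has (bad D col c w) (undup (flatten D)))) => [|nh];
  last by apply: Post_nobad => //; case: pre => [[]].
move=> /hasP [u uD bwu].
case: pre => [[gi wD wK cw cwd] [cPhi szPhi hb]].
have cD : is_complex D by case: gi.
have [adj cw' cu /eqP cwu] := and4P bwu.
have wu : w != u by case/andP: adj.
have [p [q [pq epq hpq]]] : exists p q, [/\ p < q, (forall x, (x \in [:: p; q]) = (x == w) || (x == u))
     & (p = w /\ q = u) \/ (p = u /\ q = w)].
  case: (ltngtP w u) => h; last by rewrite h eqxx in wu.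
    by exists w, u; split=> // [x|]; [rewrite !inE | left].
  by exists u, w; split=> // [x|]; [rewrite !inE orbC | right].
have wpq : w \in [:: p; q] by rewrite epq eqxx.
have upq : u \in [:: p; q] by rewrite epq eqxx orbT.
have adjpq : adjb D p q.
  case/adjP: adj => _ [F FD /andP [wF uF]]; apply/adjP; split; first by rewrite neq_ltn pq.
  exists F => //; have hF : forall x, x \in [:: p; q] -> x \in F.
    by move=> x; rewrite epq => /orP [] /eqP ->.
  by rewrite !hF // !inE eqxx ?orbT.
have eD : [:: p; q] \in D by exact: edge_in cD adjpq pq.
have eK : [:: p; q] \notin K.
  by apply/negP => eK; apply: wK; exists [:: p; q].
have n0 : 0 < n.
  apply: leq_trans (hb _ eD wpq); rewrite /cnt -has_count; apply/hasP; exists u => //.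
  by rewrite eq_sym wu cu -cwu cPhi.
have szw : size (c w :: Phi) <= d.
  by rewrite /=; apply: leq_trans szPhi; rewrite -addn1 leq_add2l.
have [z zd zn] := pick_color szw.
set a := fresh D.
set col1 := fun v => (v == a) || col v.
set c1 := fun v => if v == a then z else c v.
have e1 : forall v, v != a -> col1 v = col v /\ c1 v = c v.
  by move=> v va; rewrite /col1 /c1 (negbTE va).
have e1a : col1 a -> c1 a <= d by rewrite /c1 eqxx.
have cpq : col p /\ col q /\ c p = c q.
  have h : forall x, x \in [:: p; q] -> col x /\ c x = c w.
    by move=> x; rewrite epq => /orP [] /eqP ->.
  have [h1 h2] := h p (mem_head _ _).
  have [h3 h4] : col q /\ c q = c w by apply: h; rewrite !inE eqxx orbT.
  by rewrite h2 h4.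
set D1 := sdE D p q a.
have gi1 : GI D1 col1 c1 := step_GI gi pq eD eK e1 e1a.
have aK : ~ vert K a.
  move=> [F FK aF]; apply: (@fresh_nvert D); exists F => //.
  by case: gi => _ sKD _ _ _; exact: sKD.
have pre1 : Pre D1 col1 c1 a (c w :: Phi) n.-1.
  split; split.
  - exact: gi1.
  - exact: step_avert gi pq eD.
  - exact: aK.
  - by rewrite /col1 eqxx.
  - by rewrite /c1 eqxx.
  - by rewrite /c1 eqxx.
  - by rewrite /= addSnnS prednK.
  - move=> G GD1 aG.
    exact: (step_newcnt gi pq eD e1 cpq wpq upq wu cPhi hb GD1 aG).
have [D2 [col2 [c2 [ss12 gi2 pres12 new12 [bad12 mono12]]]]] := IH n0 _ _ _ _ _ pre1.
have wa : w != a by apply: (step_na wD).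
have st1 : stellar D [:: p; q] a D1 := step_st gi pq eD.
have wD1 : vert D1 w := step_vert gi pq eD wD.
have [wD2 cw2 cc2] := pres12 _ wD1.
have [cw1 cc1] := e1 _ wa.
have cwp : c p = c w.
  by move: (mem_head p [:: q]); rewrite epq => /orP [] /eqP ->.
have pre2 : Pre D2 col2 c2 w Phi n.
  split; split => //.
  - by rewrite cw2 cw1.
  - by rewrite cc2 cc1.
  - by rewrite cc2 cc1.
  - move=> G GD2 wG.
    have sub : {subset Phi <= c w :: Phi} by move=> x xP; rewrite inE xP orbT.
    have cpPhi : c p \notin Phi by rewrite cwp.
    have hm1 := step_mono gi pq eD e1 cpq cpPhi wa hb.
    exact: (mono12 Phi w n sub wD1 hm1 G GD2 wG).
have hmu2 : mu D2 col2 c2 w <= k.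
  rewrite -ltnS; apply: leq_trans hmu; rewrite /mu.
  have uf : u \in [seq x <- undup (flatten D) | bad D col c w x] by rewrite mem_filter bwu uD.
  rewrite -!size_filter -(prednK (_ : 0 < size [seq x <- undup (flatten D) | bad D col c w x])); last first.
    by move: uf; clear; case: [seq _ <- _ | _].
  rewrite ltnS -(size_rem uf); apply: uniq_leq_size; first exact: filter_uniq (undup_uniq _).
  move=> y; rewrite mem_filter => /andP [b2 yD2].
  have /and3P [b1 a1 a2] := bad12 _ _ b2.
  have b0 : bad D col c w y := step_bad gi pq eD e1 b1 wa a2.
  rewrite (mem_rem_uniq _ (filter_uniq _ (undup_uniq _))) inE mem_filter b0 /=.
  apply/andP; split.
    apply: contraNneq (step_noedge gi pq eD) => yu; move: b1; rewrite yu => /and4P [adj1 _ _ _].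
    by case: hpq => [[ep eq']|[ep eq']]; move: adj1; rewrite -ep -eq' // adjbC.
  have [adj0 _ _ _] := and4P b0; have [_ /vertP yD] := adj_vert adj0; by rewrite mem_undup.
have [D3 [col3 [c3 [ss23 gi3 pres23 new23 [bad23 mono23]]]]] := IHk _ _ _ _ _ pre2 hmu2.
exists D3, col3, c3; split.
- exact: ss_step st1 (ss_trans ss12 ss23).
- exact: gi3.
- move=> v vD; have va := step_na vD; have vD1 := step_vert gi pq eD vD.
  have [vD2 v2 v2'] := pres12 _ vD1; have [vD3 v3 v3'] := pres23 _ vD2.
  have [v1 v1'] := e1 _ va.
  by rewrite v3 v2 v1 v3' v2' v1'.
- move=> v vD3 nvD; case: (boolP (v \in flatten D2)) => [/vertP vD2|/negP nvD2]; last first.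
    by have [h1 h2 h3] := new23 _ vD3 (fun h => nvD2 (introT (vertP _ _) h)); split=> //; rewrite -cc1 -cc2.
  have [_ v3 v3'] := pres23 _ vD2; rewrite v3 v3'.
  case: (boolP (v \in flatten D1)) => [/vertP vD1|/negP nvD1]; last first.
    have [h1 h2 h3] := new12 _ vD2 (fun h => nvD1 (introT (vertP _ _) h)); split=> //.
    by apply: contra h3; rewrite !inE => ->; rewrite orbT.
  have [_ v2 v2'] := pres12 _ vD1; rewrite v2 v2'.
  case: (step_vert' gi pq eD vD1) => // ->.
  by rewrite /col1 /c1 eqxx.
- split.
    move=> x y b3; have /and3P [b2 xw yw] := bad23 _ _ b3.
    have /and3P [b1 xa ya] := bad12 _ _ b2.
    by rewrite (step_bad gi pq eD e1 b1 xa ya) xw yw.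
  move=> Ps v b sPs vD hv G GD3 vG.
  have va := step_na vD; have vD1 := step_vert gi pq eD vD.
  have [vD2 _ _] := pres12 _ vD1.
  have cPs : c p \notin Ps by rewrite cwp; apply: contra cPhi; exact: sPs.
  have hm1 := step_mono gi pq eD e1 cpq cPs va hv.
  have sub : {subset Ps <= c w :: Phi} by move=> x xP; rewrite inE (sPs _ xP) orbT.
  have hm2 := mono12 Ps v b sub vD1 hm1.
  exact: (mono23 Ps v b sPs vD2 hm2 G GD3 vG).
Qed.

Lemma fix_rec n : forall D col c w Phi, Pre D col c w Phi n ->
     exists D' col' c', Post D col c D' col' c' w Phi.
Proof.
elim: n => [|n IHn] D col c w Phi pre.
  by apply: (@loop 0 _ _ _ _ _ _ _ pre (leqnn _)).
apply: (@loop n.+1 _ _ _ _ _ _ _ pre (leqnn _)) => _; exact: IHn.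
Qed.

Lemma cnt_top D col c g : GI D col c -> ~ vert K g ->
  forall G, G \in D -> g \in G -> cnt [::] col c G g <= d.
Proof.
move=> [cD sKD szD _ _] gK G GD gG.
have GK : G \notin K by apply/negP => GK; apply: gK; exists G.
have uG := face_uniq (cx_face cD GD).
apply: leq_trans (_ : count (predC (pred1 g)) G <= d).
  by apply: sub_count => x /and3P [].
have := count_predC (pred1 g) G; rewrite (count_uniq_mem _ uG) gG => h.
rewrite /= add1n in h; by rewrite -ltnS h; exact: szD.
Qed.

Lemma stage2 k : forall D col c, GI D col c -> (forall x y, ~~ bad D col c x y) ->
  count (fun v => ~~ col v) (undup (flatten D)) <= k ->
  exists D' col' c', [/\ stellar_seq D D', GI D' col' c',
     (forall x y, ~~ bad D' col' c' x y) & (forall v, vert D' v -> col' v)].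
Proof.
have done_case : forall D col c, GI D col c -> (forall x y, ~~ bad D col c x y) ->
    ~~ has (fun v => ~~ col v) (undup (flatten D)) ->
  exists D' col' c', [/\ stellar_seq D D', GI D' col' c',
     (forall x y, ~~ bad D' col' c' x y) & (forall v, vert D' v -> col' v)].
  move=> D col c gi nb /hasPn h; exists D, col, c; split=> //; first exact: ss_refl.
  by move=> v /vertP vD; have := h v; rewrite mem_undup vD negbK; apply.
elim: k => [|k IHk] D col c gi nb hk.
  by apply: (done_case _ _ _ gi nb); rewrite has_count -leqNgt.
case: (boolP (has (fun v => ~~ col v) (undup (flatten D)))) => [|nh]; last exact: (done_case _ _ _ gi nb nh).
move=> /hasP [g gD ncg].
have gK : ~ vert K g.
  by move=> vK; case: gi => _ _ _ Kc _; have [cg _] := Kc _ vK; rewrite cg in ncg.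
set col1 := fun v => (v == g) || col v.
set c1 := fun v => if v == g then 0 else c v.
have e1 : forall v, v != g -> col1 v = col v /\ c1 v = c v.
  by move=> v vg; rewrite /col1 /c1 (negbTE vg).
have gi1 : GI D col1 c1.
  case: gi => cD sKD szD Kc Dc; split=> //.
    move=> v vK; have vg : v != g by apply/eqP => e; apply: gK; rewrite -e.
    by have [-> ->] := e1 _ vg; exact: Kc.
  move=> v vD; case: (eqVneq v g) => [->|vg]; first by rewrite /c1 eqxx.
  by have [-> ->] := e1 _ vg; exact: Dc.
have pre : Pre D col1 c1 g [::] d.
  split; split=> //.
  - by apply/vertP; rewrite -mem_undup.
  - by rewrite /col1 eqxx.
  - by rewrite /c1 eqxx.
  - exact: cnt_top gi1 gK.
have [D1 [col2 [c2 [ss gi2 pres new [bad2 _]]]]] := fix_rec pre.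
have nb2 : forall x y, ~~ bad D1 col2 c2 x y.
  move=> x y; apply/negP => b; have /and3P [b1 xg yg] := bad2 _ _ b.
  have [ax cx cy cxy] := and4P b1.
  have [ex1 ex2] := e1 _ xg; have [ey1 ey2] := e1 _ yg.
  by move: (nb x y); rewrite /bad ax -ex1 -ey1 cx cy -ex2 -ey2 cxy.
have hk2 : count (fun v => ~~ col2 v) (undup (flatten D1)) <= k.
  rewrite -ltnS; apply: leq_trans hk.
  have gf : g \in [seq v <- undup (flatten D) | ~~ col v] by rewrite mem_filter ncg gD.
  rewrite -!size_filter -(prednK (_ : 0 < size [seq v <- undup (flatten D) | ~~ col v])); last first.
    by move: gf; clear; case: [seq _ <- _ | _].
  rewrite ltnS -(size_rem gf); apply: uniq_leq_size; first exact: filter_uniq (undup_uniq _).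
  move=> v; rewrite mem_filter mem_undup => /andP [nc2 /vertP vD1].
  case: (boolP (v \in flatten D)) => [/vertP vD|/negP nvD]; last first.
    by have [h _ _] := new _ vD1 (fun h => nvD (introT (vertP _ _) h)); rewrite h in nc2.
  have [_ h1 _] := pres _ vD; rewrite h1 in nc2.
  have vg : v != g by apply: contraNneq nc2 => ->; rewrite /col1 eqxx.
  have [h2 _] := e1 _ vg; rewrite h2 in nc2.
  rewrite (mem_rem_uniq _ (filter_uniq _ (undup_uniq _))) inE vg mem_filter nc2 mem_undup /=.
  exact/vertP.
have [D2 [col3 [c3 [ss2 gi3 nb3 all3]]]] := IHk _ _ _ gi2 nb2 hk2.
by exists D2, col3, c3; split=> //; exact: ss_trans ss ss2.
Qed.

Definition badf (col : nat -> bool) (c : nat -> nat) (F : seq nat) :=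
  [&& size F == 2, col (nth 0 F 0), col (nth 0 F 1) & c (nth 0 F 0) == c (nth 0 F 1)].

Lemma stage1 k : forall D col c, GI D col c ->
  count (badf col c) (undup D) <= k ->
  exists D' col', [/\ stellar_seq D D', GI D' col' c & (forall x y, ~~ bad D' col' c x y)].
Proof.
have done_case : forall D col c, GI D col c -> ~~ has (badf col c) (undup D) ->
    exists D' col', [/\ stellar_seq D D', GI D' col' c & (forall x y, ~~ bad D' col' c x y)].
  move=> D col c gi /hasPn h; exists D, col; split=> //; first exact: ss_refl.
  have cD : is_complex D by case: gi.
  have key : forall x y, x < y -> ~~ bad D col c x y.
    move=> x y xy; apply/negP => /and4P [ax cx cy cxy].
    have eD := edge_in cD ax xy.
    by move: (h [:: x; y]); rewrite mem_undup eD /badf /= cx cy cxy => /(_ isT).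
  move=> x y; case: (ltngtP x y) => [xy|yx|->]; first exact: key.
    by rewrite badC; exact: key.
  by rewrite /bad /adjb eqxx.
elim: k => [|k IHk] D col c gi hk.
  by apply: (done_case _ _ _ gi); rewrite has_count -leqNgt.
case: (boolP (has (badf col c) (undup D))) => [|nh]; last exact: (done_case _ _ _ gi nh).
move=> /hasP [F FD bF].
have [cD sKD szD Kc Dc] := gi.
rewrite mem_undup in FD.
have fF := cx_face cD FD.
move: bF; rewrite /badf; case: F FD fF => [|p [|q [|r s]]] //= FD fF /and3P [cp cq cpq].
have pq : p < q by move: fF; rewrite /is_face /= andbT.
have eK : [:: p; q] \notin K.
  apply/negP => eK.
  have vp : vert K p by exists [:: p; q] => //; rewrite mem_head.
  have vq : vert K q by exists [:: p; q] => //; rewrite !inE eqxx orbT.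
  have [_ kp] := Kc _ vp; have [_ kq] := Kc _ vq.
  by case: pK => _ /(_ p q eK); rewrite -kp -kq (eqP cpq) eqxx.
set a := fresh D.
set col1 := fun v => (v != a) && col v.
have e1 : forall v, v != a -> col1 v = col v /\ c v = c v.
  by move=> v va; rewrite /col1 va.
have e1a : col1 a -> c a <= d by rewrite /col1 eqxx.
have gi1 : GI (sdE D p q a) col1 c := step_GI gi pq FD eK e1 e1a.
have st : stellar D [:: p; q] a (sdE D p q a) := step_st gi pq FD.
have hk1 : count (badf col1 c) (undup (sdE D p q a)) <= k.
  rewrite -ltnS; apply: leq_trans hk.
  have Ff : [:: p; q] \in [seq G <- undup D | badf col c G].
    by rewrite mem_filter mem_undup FD /badf /= cp cq cpq.
  rewrite -!size_filter -(prednK (_ : 0 < size [seq G <- undup D | badf col c G])); last first.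
    by move: Ff; clear; case: [seq _ <- _ | _].
  rewrite ltnS -(size_rem Ff); apply: uniq_leq_size; first exact: filter_uniq (undup_uniq _).
  move=> G; rewrite mem_filter mem_undup => /andP [].
  rewrite /badf; case: G => [|x [|y [|z t]]] //= /and3P [cx cy cxy] GD1.
  move: cx cy; rewrite /col1 => /andP [xa cx] /andP [ya cy].
  have aG : a \notin [:: x; y] by rewrite !inE negb_or eq_sym xa eq_sym ya.
  have [GD nF] := st_old st GD1 aG.
  rewrite (mem_rem_uniq _ (filter_uniq _ (undup_uniq _))) inE mem_filter mem_undup GD.
  rewrite /badf /= cx cy cxy !andbT; apply: contraNneq nF => [[-> ->]].
  by rewrite /fsub /= !inE !eqxx orbT.
have [D2 [col2 [ss2 gi2 nb2]]] := IHk _ _ _ gi1 hk1.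
by exists D2, col2; split=> //; exact: ss_step st ss2.
Qed.

End Main.

Unset Implicit Arguments.

Theorem theorem3p1 (L K : seq (seq nat)) (d m : nat) (kappa : nat -> nat) :
  is_complex L -> is_complex K -> {subset K <= L} ->
  rel_dim L K d ->
  proper_coloring K kappa m ->
  exists (L' : seq (seq nat)) (kappa' : nat -> nat),
    [/\ stellar_seq L L',
        {subset K <= L'},
        (forall v, vert K v -> kappa' v = kappa v),
        proper_coloring L' kappa' (maxn m d.+1) &
        (forall v, vert L' v -> ~ vert K v -> kappa' v <= d)].
Proof.
move=> cL cK sKL [_ szL] pK.
pose col0 := fun v => v \in flatten K.
have gi : GI K d kappa L col0 kappa.
  split=> //.
  - by move=> v vK; split=> //; exact/vertP.
  - by move=> v _ h nK; case: nK; exact/vertP.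
have [D1 [col1 [ss1 gi1 nb1]]] := @stage1 K d m kappa cK pK _ L col0 kappa gi (leqnn _).
have [L' [col' [c' [ss2 gi2 nb2 allc]]]] := @stage2 K d kappa cK _ D1 col1 kappa gi1 nb1 (leqnn _).
exists L', c'; case: gi2 => cL' sKL' _ Kc Dc; split.
- exact: ss_trans ss1 ss2.
- exact: sKL'.
- by move=> v /Kc [].
- split.
  + move=> v vL'; case: (boolP (v \in flatten K)) => [/vertP vK|/negP nK].
      have [_ ->] := Kc _ vK; apply: leq_trans (leq_maxl m d.+1).
      by case: pK => h _; exact: h.
    apply: leq_trans (leq_maxr m d.+1); rewrite ltnS; apply: Dc => //; first exact: allc.
    by move=> h; apply: nK; exact/vertP.
  + move=> x y e; have adj := edge_adj cL' e.
    have [vx vy] := adj_vert adj.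
    by move: (nb2 x y); rewrite /bad adj (allc _ vx) (allc _ vy).
- by move=> v vL' nK; apply: Dc => //; exact: allc.
Qed.
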